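(* Let $p$ be an odd prime such that $\mathbb{F}_p$ contains a primitive cube root of unity $\omega$, and for integers $0\le r_1,r_2,r_3\le p-1$ let $\mathcal{C}_{(r_1,r_2,r_3)}$ be the cyclic code of length $3p$ over $\mathbb{F}_p$ generated by $(x-1)^{r_1}(x-\omega)^{r_2}(x-\omega^2)^{r_3}$, and let $d_p$ denote minimum symbol-pair distance. Then: (1) $d_p(\mathcal{C}_{(0,r_2,0)})=4$ whenever $2\le r_2\le p-1$; and, for exponents satisfying $p-1\ge r_1\ge r_2\ge r_3\ge 0$: (2) $d_p(\mathcal{C}_{(2,1,0)})=5$; (3) $d_p(\mathcal{C}_{(r_1,r_2,0)})=6$ whenever $r_1+r_2\ge 4$ and $r_2\ge 1$; (4) $d_p(\mathcal{C}_{(2,r_2,r_3)})=6$ whenever $2\le r_2+r_3\le 4$.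
   Context: For $\mathbf{x}=(x_0,\dots,x_{n-1})\in\mathbb{F}_p^n$, the symbol-pair distance is $D_p(\mathbf{x},\mathbf{y})=|\{i:(x_i,x_{i+1})\neq(y_i,y_{i+1})\}|$ (indices modulo $n$); the minimum symbol-pair distance of a code is the minimum of $D_p$ over distinct codewords. The cyclic code generated by $g(x)\mid x^n-1$ is the ideal $\langle g(x)\rangle$ in $\mathbb{F}_p[x]/\langle x^n-1\rangle$. *)

(* Defs.v *)
From mathcomp Require Import all_boot all_order all_algebra.
Set Implicit Arguments. Unset Strict Implicit. Unset Printing Implicit Defensive.
Import GRing.Theory.
Local Open Scope ring_scope.

Definition word (F : Type) (n : nat) := {ffun 'I_n -> F}.

(* Symbol-pair distance: number of i with (x_i, x_{i+1}) <> (y_i, y_{i+1}),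
   indices modulo n (ordS i has value (i+1) mod n). *)
Definition pair_dist (F : finType) (n : nat) (x y : word F n) : nat :=
  #|[pred i : 'I_n | (x i != y i) || (x (ordS i) != y (ordS i))]|.

Definition word_poly (F : fieldType) (n : nat) (c : word F n) : {poly F} :=
  \sum_(i < n) c i *: 'X^i.

(* The cyclic code generated by g: the ideal <g> of F[x]/<x^n - 1>,
   i.e. words whose polynomial is (g * f) mod (x^n - 1) for some f. *)
Definition cyclic_code (F : fieldType) (n : nat) (g : {poly F}) (c : word F n) : Prop :=
  exists f : {poly F}, word_poly c = (g * f) %% ('X^n - 1).

Definition min_pair_dist (F : finType) (n : nat) (C : word F n -> Prop) (d : nat) : Prop :=
  (exists x y : word F n, [/\ C x, C y, x <> y & pair_dist x y = d]) /\
  (forall x y : word F n, C x -> C y -> x <> y -> (d <= pair_dist x y)%N).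

Definition gen3 (F : fieldType) (w : F) (r1 r2 r3 : nat) : {poly F} :=
  ('X - 1) ^+ r1 * ('X - w%:P) ^+ r2 * ('X - (w ^+ 2)%:P) ^+ r3.

Definition Ccode (p : nat) (w : 'F_p) (r1 r2 r3 : nat) : word 'F_p (3 * p) -> Prop :=
  cyclic_code (gen3 w r1 r2 r3).

(* Main.v *)
Require Import Defs.
From mathcomp Require Import all_boot all_order all_algebra all_field.
From mathcomp Require Import ring zify.
Import GRing.Theory.
Local Open Scope ring_scope.


Section Alg.
Variable F : fieldType.
Variable w : F.
Hypothesis hw : w ^+ 2 + w + 1 = 0.
Hypothesis h3 : 3%:R != 0 :> F.
Hypothesis h2 : 2%:R != 0 :> F.

Lemma w3 : w ^+ 3 = 1.
Proof. apply/eqP; rewrite -subr_eq0. have -> : w^+3 - 1 = (w - 1) * (w^+2 + w + 1) by ring.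
by rewrite hw mulr0. Qed.

Lemma w_neq0 : w != 0.
Proof. apply/eqP=> w0; move: hw; rewrite w0; apply/eqP. by rewrite expr0n /= add0r add0r oner_eq0. Qed.

Lemma w_neq1 : w != 1.
Proof. apply/eqP=> w1; move: h3.
have -> : 3%:R = w ^+ 2 + w + 1 :> F by rewrite w1; ring.
by rewrite hw eqxx. Qed.

Lemma w_neqw2 : w != w ^+ 2.
Proof. apply/eqP=> e. have : w * (w - 1) = 0 by rewrite mulrBr mulr1 -expr2 -e subrr.
by move/eqP; rewrite mulf_eq0 subr_eq0 (negbTE w_neq0) (negbTE w_neq1). Qed.

Lemma prod0L {a b : F} : a * b = 0 -> b != 0 -> a = 0.
Proof. by move/eqP; rewrite mulf_eq0 => /orP [/eqP //| ->]. Qed.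
Lemma prod0R {a b : F} : a * b = 0 -> a != 0 -> b = 0.
Proof. by move/eqP; rewrite mulf_eq0 => /orP [-> //| /eqP]. Qed.
Lemma lin0 (E : F) (T : F) : T = E -> E = 0 -> T = 0.
Proof. by move=> -> ->. Qed.

Lemma pairAdj (A B al x : F) : al != 0 ->
  A * al + B * (al * w) = 0 ->
  A * al * x + B * (al * w) * (x + 1) = 0 -> B = 0.
Proof.
move=> al0 e0 e1.
have : B * (al * w) = 0.
  transitivity ((A * al * x + B * (al * w) * (x + 1)) - x * (A * al + B * (al * w))).
    by ring.
  rewrite e0 e1. idtac. ring.
by move/prod0L; apply; rewrite mulf_neq0 // w_neq0.
Qed.

Ltac lc E := transitivity E; [ by ring | ].

Lemma pairAny (A B x y al be : F) : A != 0 ->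
  A + B = 0 -> A * x + B * y = 0 -> A * al + B * be = 0 -> x = y /\ al = be.
Proof.
move=> A0 e0 e1 e2.
have hB : B = - A by apply/eqP; rewrite -subr_eq0 opprK addrC e0.
split; apply/eqP; rewrite -subr_eq0; apply/eqP; apply: (@prod0R A) => //.
  by lc (A * x + B * y - y * (A + B)); rewrite e0 e1; ring.
by lc (A * al + B * be - be * (A + B)); rewrite e0 e2; ring.
Qed.

Lemma tripleCons (A B C x al : F) : A != 0 -> al != 0 ->
  A + B + C = 0 -> A * x + B * (x + 1) + C * (x + 1 + 1) = 0 ->
  A * al + B * (al * w) + C * (al * w * w) = 0 -> False.
Proof.
move=> A0 al0 e0 e1 e2.
have eB : B = - (2%:R * C).
  apply/eqP; rewrite -subr_eq0; apply/eqP.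
  by lc (A * x + B * (x + 1) + C * (x + 1 + 1) - x * (A + B + C)); rewrite e0 e1; ring.
have eA : A = C.
  apply/eqP; rewrite -subr_eq0; apply/eqP.
  by lc ((A + B + C) - (B + 2%:R * C)); rewrite e0 eB; ring.
have eC : C = 0.
  apply: (@prod0L _ (al * (w - 1) ^+ 2)).
    move: e2; rewrite eA eB => e2.
    by lc (C * al + - (2%:R * C) * (al * w) + C * (al * w * w)); exact e2.
  by rewrite mulf_neq0 // expf_neq0 // subr_eq0 w_neq1.
by move: A0; rewrite eA eC eqxx.
Qed.

Lemma tripleAdjA (A B C x y : F) : A != 0 -> B != 0 ->
  A + B + C = 0 -> A * x + B * (x + 1) + C * y = 0 ->
  A * (x * (x - 1)) + B * ((x + 1) * x) + C * (y * (y - 1)) = 0 -> False.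
Proof.
move=> A0 B0 e0 e1 e2.
have f1 : B + (y - x) * C = 0.
  by lc (A * x + B * (x + 1) + C * y - x * (A + B + C)); rewrite e0 e1; ring.
have f2 : (y - x) * ((y - x - 1) * C) = 0.
  lc (A * (x * (x - 1)) + B * ((x + 1) * x) + C * (y * (y - 1))
      - 2%:R * x * (A * x + B * (x + 1) + C * y) + x * (x + 1) * (A + B + C)).
  by rewrite e0 e1 e2; ring.
move/eqP: f2; rewrite mulf_eq0 => /orP [/eqP d0|].
  by move: f1; rewrite d0 mul0r addr0 => /eqP; rewrite (negbTE B0).
rewrite mulf_eq0 => /orP [/eqP d1|/eqP c0].
  have hyx : y - x = 1 by apply/eqP; rewrite -subr_eq0 d1.
  rewrite hyx in f1.
  have : A = 0 by lc (A + B + C - (B + 1 * C)); rewrite e0 f1; ring.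
  by move/eqP; rewrite (negbTE A0).
by move: f1; rewrite c0 mulr0 addr0 => /eqP; rewrite (negbTE B0).
Qed.


Lemma w2_neq1 : w ^+ 2 != 1.
Proof. apply/eqP=> e; move: w_neq1; rewrite -{1}w3 exprS e mulr1 eqxx //. Qed.

Lemma tripleAdjB (A B C x y al be : F) : A != 0 -> B != 0 -> al != 0 ->
  A + B + C = 0 -> A * x + B * (x + 1) + C * y = 0 ->
  A * al + B * (al * w) + C * be = 0 ->
  A * al * x + B * (al * w) * (x + 1) + C * be * y = 0 -> False.
Proof.
move=> A0 B0 al0 e0 e1 e2 e3.
have f1 : B + (y - x) * C = 0.
  by lc (A * x + B * (x + 1) + C * y - x * (A + B + C)); rewrite e0 e1; ring.
have f4 : (y - x) * (C * (be - al * w)) = 0.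
  lc ((A * al * x + B * (al * w) * (x + 1) + C * be * y) - x * (A * al + B * (al * w) + C * be)
      - al * w * (B + (y - x) * C)).
  by rewrite e3 e2 f1; ring.
move/eqP: f4; rewrite mulf_eq0 => /orP [/eqP d0|].
  by move: f1; rewrite d0 mul0r addr0 => /eqP; rewrite (negbTE B0).
rewrite mulf_eq0 => /orP [/eqP c0|/eqP hbe].
  by move: f1; rewrite c0 mulr0 addr0 => /eqP; rewrite (negbTE B0).
have hbe' : be = al * w by apply/eqP; rewrite -subr_eq0 hbe.
rewrite hbe' in e2.
have g : (B + C) * (al * (w - 1)) = 0.
  by lc ((A * al + B * (al * w) + C * (al * w)) - al * (A + B + C)); rewrite e2 e0; ring.
have gBC : B + C = 0 by apply: (prod0L g); rewrite mulf_neq0 // subr_eq0 w_neq1.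
have : A = 0 by lc ((A + B + C) - (B + C)); rewrite e0 gBC; ring.
by move/eqP; rewrite (negbTE A0).
Qed.

Lemma tripleAdjC (A B C al be : F) : A != 0 -> B != 0 -> al != 0 ->
  al ^+ 3 = 1 -> be ^+ 3 = 1 ->
  A + B + C = 0 ->
  A * al + B * (al * w) + C * be = 0 ->
  A * al ^+ 2 + B * (al ^+ 2 * w ^+ 2) + C * be ^+ 2 = 0 -> False.
Proof.
move=> A0 B0 al0 al3 be3 e0 e2 e4.
have fac : (be - al) * ((be - al * w) * (be - al * w ^+ 2)) = 0.
  lc (be ^+ 3 - al ^+ 3 - al * be ^+ 2 * (w ^+ 2 + w + 1) + al ^+ 2 * be * w * (w ^+ 2 + w + 1)
      - al ^+ 3 * (w ^+ 3 - 1)).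
  by rewrite hw w3 al3 be3; ring.
have wm1 : al * (w - 1) != 0 by rewrite mulf_neq0 // subr_eq0 w_neq1.
move/eqP: fac; rewrite mulf_eq0 => /orP [/eqP h|].
  have hbe : be = al by apply/eqP; rewrite -subr_eq0 h.
  rewrite hbe in e2.
  have : B = 0.
    apply: (prod0L _ wm1).
    by lc ((A * al + B * (al * w) + C * al) - al * (A + B + C)); rewrite e2 e0; ring.
  by move/eqP; rewrite (negbTE B0).
rewrite mulf_eq0 => /orP [/eqP h|/eqP h].
  have hbe : be = al * w by apply/eqP; rewrite -subr_eq0 h.
  rewrite hbe in e2.
  have gBC : B + C = 0.
    apply: (prod0L _ wm1).
    by lc ((A * al + B * (al * w) + C * (al * w)) - al * (A + B + C)); rewrite e2 e0; ring.
  have : A = 0 by lc ((A + B + C) - (B + C)); rewrite e0 gBC; ring.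
  by move/eqP; rewrite (negbTE A0).
have hbe : be = al * w ^+ 2 by apply/eqP; rewrite -subr_eq0 h.
rewrite hbe in e2 e4.
have eBC : B - C = 0.
  apply: (@prod0L _ (al ^+ 2 * (w - w ^+ 2))).
    lc (al * (A * al + B * (al * w) + C * (al * w ^+ 2))
        - (A * al ^+ 2 + B * (al ^+ 2 * w ^+ 2) + C * (al * w ^+ 2) ^+ 2)
        + al ^+ 2 * C * w * (w ^+ 3 - 1)).
    by rewrite e2 e4 w3; ring.
  by rewrite mulf_neq0 ?expf_neq0 // subr_eq0 w_neqw2.
have eC : C = B by apply/eqP; rewrite eq_sym -subr_eq0 eBC.
have : B = 0.
  apply: (@prod0L _ (al * 3%:R)); last by rewrite mulf_neq0.
  rewrite eC in e0 e2.
  lc (- ((A * al + B * (al * w) + B * (al * w ^+ 2)) - al * (A + B + B)) + al * B * (w ^+ 2 + w + 1)).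
  by rewrite e2 e0 hw; ring.
by move/eqP; rewrite (negbTE B0).
Qed.

Lemma quadA (A B C D x al : F) : A != 0 -> al != 0 ->
  A + B + C + D = 0 ->
  A * x + B * (x + 1) + C * (x + 1 + 1) + D * (x + 1 + 1 + 1) = 0 ->
  A * (x * (x - 1)) + B * ((x + 1) * x) + C * ((x + 1 + 1) * (x + 1))
    + D * ((x + 1 + 1 + 1) * (x + 1 + 1)) = 0 ->
  A * al + B * (al * w) + C * (al * w * w) + D * (al * w * w * w) = 0 -> False.
Proof.
move=> A0 al0 e0 e1 e2 e3.
have R : B + 2%:R * C + 3%:R * D = 0.
  by lc (A * x + B * (x + 1) + C * (x + 1 + 1) + D * (x + 1 + 1 + 1) - x * (A + B + C + D));
  rewrite e0 e1; ring.
have T : C + 3%:R * D = 0.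
  apply: (@prod0R 2%:R) => //.
  lc (A * (x * (x - 1)) + B * ((x + 1) * x) + C * ((x + 1 + 1) * (x + 1))
    + D * ((x + 1 + 1 + 1) * (x + 1 + 1))
    - 2%:R * x * (A * x + B * (x + 1) + C * (x + 1 + 1) + D * (x + 1 + 1 + 1))
    + x * (x + 1) * (A + B + C + D)).
  by rewrite e0 e1 e2; ring.
have P : A + B * w + C * w ^+ 2 + D = 0.
  apply: (@prod0L _ al) => //.
  lc ((A * al + B * (al * w) + C * (al * w * w) + D * (al * w * w * w)) - D * al * (w ^+ 3 - 1)).
  by rewrite e3 w3; ring.
have D0 : D = 0.
  apply: (@prod0L _ (3%:R * w * (w - 1))).
    lc ((A + B + C + D) + (B + 2%:R * C + 3%:R * D) * (w - 1) + (C + 3%:R * D) * (w - 1) ^+ 2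
        - (A + B * w + C * w ^+ 2 + D)).
    by rewrite e0 R T P; ring.
  by rewrite !mulf_neq0 // ?w_neq0 // subr_eq0 w_neq1.
have C0 : C = 0 by lc ((C + 3%:R * D) - 3%:R * D); rewrite T D0; ring.
have B0 : B = 0 by lc ((B + 2%:R * C + 3%:R * D) - 2%:R * C - 3%:R * D); rewrite R C0 D0; ring.
have : A = 0 by lc ((A + B + C + D) - B - C - D); rewrite e0 B0 C0 D0; ring.
by move/eqP; rewrite (negbTE A0).
Qed.

Lemma quadB (A B C D x al : F) : A != 0 -> al != 0 ->
  A + B + C + D = 0 ->
  A * x + B * (x + 1) + C * (x + 1 + 1) + D * (x + 1 + 1 + 1) = 0 ->
  A * al + B * (al * w) + C * (al * w * w) + D * (al * w * w * w) = 0 ->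
  A * al * x + B * (al * w) * (x + 1) + C * (al * w * w) * (x + 1 + 1)
    + D * (al * w * w * w) * (x + 1 + 1 + 1) = 0 -> False.
Proof.
move=> A0 al0 e0 e1 e3 e4.
have R : B + 2%:R * C + 3%:R * D = 0.
  by lc (A * x + B * (x + 1) + C * (x + 1 + 1) + D * (x + 1 + 1 + 1) - x * (A + B + C + D));
  rewrite e0 e1; ring.
have P : A + B * w + C * w ^+ 2 + D = 0.
  apply: (@prod0L _ al) => //.
  lc ((A * al + B * (al * w) + C * (al * w * w) + D * (al * w * w * w)) - D * al * (w ^+ 3 - 1)).
  by rewrite e3 w3; ring.
have U : B * w + 2%:R * C * w ^+ 2 + 3%:R * D = 0.
  apply: (@prod0L _ al) => //.
  lc ((A * al * x + B * (al * w) * (x + 1) + C * (al * w * w) * (x + 1 + 1)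
    + D * (al * w * w * w) * (x + 1 + 1 + 1))
    - x * (A * al + B * (al * w) + C * (al * w * w) + D * (al * w * w * w))
    - 3%:R * D * al * (w ^+ 3 - 1)).
  by rewrite e3 e4 w3; ring.
have V : B + C * (1 + w) = 0.
  apply: (@prod0R (1 - w)); last by rewrite subr_eq0 eq_sym w_neq1.
  by lc ((A + B + C + D) - (A + B * w + C * w ^+ 2 + D)); rewrite e0 P; ring.
have C0 : C = 0.
  apply: (@prod0L _ (w ^+ 2 - 1)); last by rewrite subr_eq0 w2_neq1.
  lc ((B * w + 2%:R * C * w ^+ 2 + 3%:R * D) - (B + 2%:R * C + 3%:R * D)
      - (w - 1) * (B + C * (1 + w))).
  by rewrite U R V; ring.
have B0 : B = 0 by lc ((B + C * (1 + w)) - C * (1 + w)); rewrite V C0; ring.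
have D0 : D = 0.
  apply: (@prod0R 3%:R) => //.
  by lc ((B + 2%:R * C + 3%:R * D) - B - 2%:R * C); rewrite R B0 C0; ring.
have : A = 0 by lc ((A + B + C + D) - B - C - D); rewrite e0 B0 C0 D0; ring.
by move/eqP; rewrite (negbTE A0).
Qed.

Lemma quadC (A B C D x al be : F) : A != 0 -> al != 0 -> be != 0 ->
  A + B + C + D = 0 ->
  A * x + B * (x + 1) + C * (x + 1 + 1) + D * (x + 1 + 1 + 1) = 0 ->
  A * al + B * (al * w) + C * (al * w * w) + D * (al * w * w * w) = 0 ->
  A * be + B * (be * w ^+ 2) + C * (be * w ^+ 2 * w ^+ 2)
    + D * (be * w ^+ 2 * w ^+ 2 * w ^+ 2) = 0 -> False.
Proof.
move=> A0 al0 be0 e0 e1 e3 e5.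
have R : B + 2%:R * C + 3%:R * D = 0.
  by lc (A * x + B * (x + 1) + C * (x + 1 + 1) + D * (x + 1 + 1 + 1) - x * (A + B + C + D));
  rewrite e0 e1; ring.
have P : A + B * w + C * w ^+ 2 + D = 0.
  apply: (@prod0L _ al) => //.
  lc ((A * al + B * (al * w) + C * (al * w * w) + D * (al * w * w * w)) - D * al * (w ^+ 3 - 1)).
  by rewrite e3 w3; ring.
have P2 : A + B * w ^+ 2 + C * w + D = 0.
  apply: (@prod0L _ be) => //.
  lc ((A * be + B * (be * w ^+ 2) + C * (be * w ^+ 2 * w ^+ 2)
    + D * (be * w ^+ 2 * w ^+ 2 * w ^+ 2)) - be * C * w * (w ^+ 3 - 1)
    - be * D * (w ^+ 3 - 1) * (w ^+ 3 + 1)).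
  by rewrite e5 w3; ring.
have eBC : B - C = 0.
  apply: (@prod0L _ (w - w ^+ 2)); last by rewrite subr_eq0 w_neqw2.
  by lc ((A + B * w + C * w ^+ 2 + D) - (A + B * w ^+ 2 + C * w + D)); rewrite P P2; ring.
have eC : C = B by apply/eqP; rewrite eq_sym -subr_eq0 eBC.
have B0 : B = 0.
  apply: (@prod0R 3%:R) => //.
  rewrite eC in e0 P.
  lc ((A + B + B + D) - (A + B * w + B * w ^+ 2 + D) + B * (w ^+ 2 + w + 1)).
  by rewrite e0 P hw; ring.
have D0 : D = 0.
  apply: (@prod0R 3%:R) => //.
  by lc ((B + 2%:R * C + 3%:R * D) - B - 2%:R * C); rewrite R eC B0; ring.
have : A = 0 by lc ((A + B + C + D) - B - C - D); rewrite e0 eC B0 D0; ring.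
by move/eqP; rewrite (negbTE A0).
Qed.

End Alg.


Section Cond.
Variable p : nat.
Hypothesis pP : prime p.
Local Notation n := (3 * p)%N.
Local Notation F := ('F_p).

Lemma natn0 : (n%:R : F) = 0.
Proof. by rewrite natrM pchar_Fp_0 // mulr0. Qed.

Lemma natmodn k : ((k %% n)%:R : F) = k%:R.
Proof. by rewrite -(Fp_nat_mod pP k) -(Fp_nat_mod pP (k %% n)) modn_dvdm // dvdn_mull. Qed.

Definition Sj (c : word F n) (a : F) (j : nat) :=
  \sum_(i < n) c i * a ^+ i * (i ^_ j)%:R.

Lemma derivn_Xsub (a : F) (k : nat) (u : {poly F}) j : (j <= k)%N ->
  exists v, (('X - a%:P) ^+ k * u)^`(j) = ('X - a%:P) ^+ (k - j) * v.
Proof.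
elim: j => [|j IH] hj; first by exists u; rewrite subn0.
have [v hv] := IH (ltnW hj).
rewrite derivnS hv.
have hk : (k - j = (k - j.+1).+1)%N by rewrite subnSK.
rewrite hk derivM deriv_exp derivXsubC mul1r.
exists (v *+ (k - j.+1).+1 + ('X - a%:P) * v^`()).
rewrite /= exprS; ring.
Qed.

Lemma derivn_Xn (q : {poly F}) j :
  exists v, (q * ('X^n - 1))^`(j) = v * ('X^n - 1).
Proof.
elim: j => [|j [v hv]]; first by exists q.
rewrite derivnS hv derivM derivB derivXn derivC subr0.
exists (v^`()).
have -> : ('X^(n.-1) *+ n : {poly F}) = 0.
  by rewrite -mulr_natr -polyC_natr natn0 mulr0.
by rewrite mulr0 addr0.
Qed.

Lemma Sj_deriv (c : word F n) (a : F) j :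
  a ^+ j * ((word_poly c)^`(j)).[a] = Sj c a j.
Proof.
rewrite /word_poly /Sj linear_sum horner_sum mulr_sumr; apply: eq_bigr => i _.
rewrite linearZ /= derivnXn hornerZ hornerMn hornerXn.
case: (leqP j i) => hij.
  by rewrite !mulrnAr mulr1 mulrCA -exprD subnKC // mulrA.
by rewrite ffact_small // !mulr0n !mulr0.
Qed.

Lemma cond (c : word F n) (a : F) (k : nat) (u q : {poly F}) j :
  a ^+ n = 1 -> word_poly c = ('X - a%:P) ^+ k * u - q * ('X^n - 1) -> (j < k)%N ->
  Sj c a j = 0.
Proof.
move=> an hc hj; rewrite -Sj_deriv hc derivnB.
have [v hv] := derivn_Xsub a k u j (ltnW hj).
have [v' hv'] := derivn_Xn q j.
rewrite hv hv' hornerD hornerN !hornerE an subrr subrr mulr0 expr0n.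
by rewrite subn_eq0 leqNgt hj /= mul0r oppr0 addr0 mulr0.
Qed.

End Cond.


Section Comb.
Variable K : zmodType.
Variable m : nat.
Hypothesis m_gt1 : (1 < m)%N.
Implicit Types (c : {ffun 'I_m -> K}) (t u : 'I_m).

Definition Sset c := [set i | c i != 0].
Definition Tset c := [set i | (c i == 0) && (c (ordS i) != 0)].
Definition Aset c := [set i | (c i != 0) && (c (ordS i) != 0)].
Definition pw c := #|[set i | (c i != 0) || (c (ordS i) != 0)]|.

Lemma pwST c : pw c = (#|Sset c| + #|Tset c|)%N.
Proof.
rewrite /pw -cardsUI.
have -> : Sset c :&: Tset c = set0.
  by apply/setP=> i; rewrite !inE; case: (c i == 0); rewrite ?andbF ?andFb ?andbT //=.
rewrite cards0 addn0; apply: eq_card => i; rewrite /Sset /Aset /Tset !inE.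
idtac.
by case: (c i == 0); rewrite ?andbF ?andFb ?andbT ?orbF //=.
Qed.

Lemma SAT c : #|Sset c| = (#|Aset c| + #|Tset c|)%N.
Proof.
rewrite -(card_preimset (Sset c) (@ordS_inj m)) -cardsUI.
have -> : Aset c :&: Tset c = set0.
  by apply/setP=> i; rewrite !inE; case: (c i == 0); rewrite ?andbF ?andFb ?andbT //=.
rewrite cards0 addn0; apply: eq_card => i; rewrite /Sset /Aset /Tset !inE.
idtac.
by case: (c i == 0); rewrite ?andbF ?andFb ?andbT ?orbF //=.
Qed.

Lemma iterS_val t k : val (iter k (@ordS m) t) = ((t + k) %% m)%N.
Proof.
elim: k => [|k IH]; first by rewrite addn0 modn_small.
by rewrite iterS /= IH addnS -[((t + k) %% m).+1]addn1 -[(t + k).+1]addn1 modnDml.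
Qed.

Lemma iter_inj t j j' : (j < m)%N -> (j' < m)%N ->
  iter j (@ordS m) t = iter j' (@ordS m) t -> j = j'.
Proof.
move=> hj hj' /(congr1 val); rewrite !iterS_val => /eqP.
by rewrite eqn_modDl !modn_small // => /eqP.
Qed.

Lemma reach t u : exists2 j, (j < m)%N & u = iter j (@ordS m) t.
Proof.
have ht := ltn_ord t; have hu := ltn_ord u.
case: (leqP t u) => htu.
  exists (u - t)%N; first lia.
  by apply: val_inj; rewrite iterS_val subnKC // modn_small.
exists (u + m - t)%N; first lia.
apply: val_inj; rewrite iterS_val (_ : (t + (u + m - t) = u + m)%N); last lia.
by rewrite modnDr modn_small.
Qed.

Lemma full c s : Tset c = set0 -> c s != 0 -> forall u, c u != 0.
Proof.
move=> T0 cs u.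
have step : forall i, c (ordS i) != 0 -> c i != 0.
  move=> i hi; apply/negP=> /eqP ci.
  have : i \in Tset c by rewrite inE ci eqxx hi.
  by rewrite T0 inE.
have [j _ es] := reach u s.
move: cs; rewrite es; clear es.
elim: j => [//|j IH] h; exact: (IH (step _ h)).
Qed.

Lemma window c t : Tset c = [set t] -> forall u, c u != 0 ->
  exists2 j, (0 < j <= #|Sset c|)%N & u = iter j (@ordS m) t.
Proof.
move=> Tt.
have tT : t \in Tset c by rewrite Tt set11.
have ct : c t = 0 by move: tT; rewrite inE => /andP [/eqP].
have chain : forall j, (0 < j < m)%N -> c (iter j (@ordS m) t) != 0 ->
    forall l, (0 < l <= j)%N -> c (iter l (@ordS m) t) != 0.
  elim=> [//|j IH] hj hc l hl.
  case: (ltnP l j.+1) => hlj; last by have -> : l = j.+1 by lia.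
  case: j IH hj hc hl hlj => [|j] IH hj hc hl hlj; first by lia.
  apply: IH => //; first lia; last lia.
  apply/negP=> /eqP h0.
  have : iter j.+1 (@ordS m) t \in Tset c by rewrite inE h0 eqxx.
  rewrite Tt inE => /eqP h.
  have : j.+1 = 0%N by apply: (@iter_inj t) => //; lia.
  by [].
move=> u cu.
have [j hj eu] := reach t u.
have j0 : (0 < j)%N.
  case: j hj eu => [|//] _ eu; move: cu; rewrite eu /= ct; by rewrite eqxx.
exists j => //; rewrite j0 /=.
pose f := fun l : 'I_j => iter l.+1 (@ordS m) t.
have finj : injective f.
  move=> l l' e; apply: val_inj; apply: succn_inj.
  have H := @iter_inj t l.+1 l'.+1; have h1 := ltn_ord l; have h2 := ltn_ord l'.
  by apply: H => //; lia.
have <- : #|f @: [set: 'I_j]| = j by rewrite card_imset // cardsT card_ord.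
apply: subset_leq_card; apply/subsetP=> v /imsetP [l _ ->].
have hl := ltn_ord l.
rewrite inE; apply: (chain j); [lia | by rewrite -eu | lia].
Qed.


Definition supp c (L : seq 'I_m) := forall i, i \notin L -> c i = 0.

Lemma single_case c : #|Sset c| = 1%N ->
  (forall s, supp c [:: s] -> c s != 0 -> False) -> False.
Proof.
move=> /eqP /cards1P [s hs] H; apply: (H s).
  move=> i; rewrite inE => his; apply/eqP; apply/negPn/negP => ci.
  have : i \in Sset c by rewrite /Sset inE.
  by rewrite hs inE => /eqP e; move: his; rewrite e eqxx.
have : s \in Sset c by rewrite hs set11.
by rewrite /Sset inE.
Qed.

Lemma pair_case c : #|Sset c| = 2%N ->
  (forall s u, s != u -> supp c [:: s; u] -> c s != 0 -> False) -> False.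
Proof.
move=> /eqP /cards2P [s [u [su hs]]] H; apply: (H s u su).
  move=> i; rewrite !inE negb_or => /andP [h1 h2]; apply/eqP; apply/negPn/negP => ci.
  have : i \in Sset c by rewrite /Sset inE.
  by rewrite hs !inE (negbTE h1) (negbTE h2).
have : s \in Sset c by rewrite hs !inE eqxx.
by rewrite /Sset inE.
Qed.

Lemma full_case c i0 : #|Tset c| = 0%N -> c i0 != 0 -> #|Sset c| = m.
Proof.
move=> /eqP; rewrite cards_eq0 => /eqP T0 ci0.
rewrite -[RHS](card_ord m) -cardsT; apply: eq_card => i.
by rewrite /Sset !inE (@full c i0 T0 ci0).
Qed.

Lemma win_case c : #|Tset c| = 1%N ->
  exists t, supp c [seq iter j.+1 (@ordS m) t | j <- iota 0 #|Sset c|] /\ c (ordS t) != 0.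
Proof.
move=> /eqP /cards1P [t Tt]; exists t; split.
  move=> i hi; apply/eqP; apply/negPn/negP => ci.
  have [j /andP [j0 jS] ei] := @window c t Tt i ci.
  move: hi; rewrite ei; case: j j0 jS {ei} => [//|j] _ jS.
  move/negP; apply; apply: (map_f (fun j => iter j.+1 (@ordS m) t)).
  rewrite mem_iota; lia.
have : t \in Tset c by rewrite Tt set11.
by rewrite inE => /andP [].
Qed.

Lemma lb4 c i0 : (4 <= m)%N -> c i0 != 0 ->
  (forall s, supp c [:: s] -> c s != 0 -> False) ->
  (forall s, supp c [:: s; ordS s] -> c s != 0 -> False) ->
  (4 <= pw c)%N.
Proof.
move=> m4 ci0 H1 H2; rewrite pwST.
have S0 : (0 < #|Sset c|)%N by apply/card_gt0P; exists i0; rewrite /Sset inE.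
have [T0|[T1|T2]] : #|Tset c| = 0%N \/ #|Tset c| = 1%N \/ (2 <= #|Tset c|)%N by lia.
- by rewrite (@full_case c i0 T0 ci0) T0; lia.
- have [S1|[S2|S3]] : #|Sset c| = 1%N \/ #|Sset c| = 2%N \/ (3 <= #|Sset c|)%N by lia.
  + by case: (@single_case c S1 H1).
  + have [t [sup ct]] := @win_case c T1.
    by rewrite S2 /= in sup; case: (H2 _ sup ct).
  + lia.
- have [S1|S2] : #|Sset c| = 1%N \/ (2 <= #|Sset c|)%N by lia.
  + by case: (@single_case c S1 H1).
  + lia.
Qed.

Lemma lb5 c i0 : (5 <= m)%N -> c i0 != 0 ->
  (forall s, supp c [:: s] -> c s != 0 -> False) ->
  (forall s u, s != u -> supp c [:: s; u] -> c s != 0 -> False) ->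
  (forall s, supp c [:: s; ordS s; ordS (ordS s)] -> c s != 0 -> False) ->
  (5 <= pw c)%N.
Proof.
move=> m5 ci0 H1 H2 H3; rewrite pwST.
have S0 : (0 < #|Sset c|)%N by apply/card_gt0P; exists i0; rewrite /Sset inE.
have [S1|[S2|[S3|S4]]] : #|Sset c| = 1%N \/ #|Sset c| = 2%N \/ #|Sset c| = 3%N
   \/ (4 <= #|Sset c|)%N by lia.
- by case: (@single_case c S1 H1).
- by case: (@pair_case c S2 H2).
- have [T0|[T1|T2]] : #|Tset c| = 0%N \/ #|Tset c| = 1%N \/ (2 <= #|Tset c|)%N by lia.
  + by move: (@full_case c i0 T0 ci0); lia.
  + have [t [sup ct]] := @win_case c T1.
    by rewrite S3 /= in sup; case: (H3 _ sup ct).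
  + lia.
- have [T0|T1] : #|Tset c| = 0%N \/ (1 <= #|Tset c|)%N by lia.
  + by move: (@full_case c i0 T0 ci0); lia.
  + lia.
Qed.

Lemma lb6 c i0 : (6 <= m)%N -> c i0 != 0 ->
  (forall s, supp c [:: s] -> c s != 0 -> False) ->
  (forall s u, s != u -> supp c [:: s; u] -> c s != 0 -> False) ->
  (forall s u, u \notin [:: s; ordS s] -> supp c [:: s; ordS s; u] -> c s != 0 ->
     c (ordS s) != 0 -> False) ->
  (forall s, supp c [:: s; ordS s; ordS (ordS s); ordS (ordS (ordS s))] -> c s != 0 -> False) ->
  (6 <= pw c)%N.
Proof.
move=> m6 ci0 H1 H2 H3 H4; rewrite pwST.
have S0 : (0 < #|Sset c|)%N by apply/card_gt0P; exists i0; rewrite /Sset inE.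
have [S1|[S2|[S3|[S4|S5]]]] : #|Sset c| = 1%N \/ #|Sset c| = 2%N \/ #|Sset c| = 3%N
   \/ #|Sset c| = 4%N \/ (5 <= #|Sset c|)%N by lia.
- by case: (@single_case c S1 H1).
- by case: (@pair_case c S2 H2).
- have [T3|T2] : (3 <= #|Tset c|)%N \/ (#|Tset c| <= 2)%N by lia.
    lia.
  have A1 : (0 < #|Aset c|)%N by move: (SAT c); lia.
  have [i] := card_gt0P A1; rewrite inE => /andP [ci cSi].
  have sub2 : [set i; ordS i] \subset Sset c.
    by apply/subsetP=> v; rewrite !inE => /orP [] /eqP ->; rewrite ?ci ?cSi.
  have : ~~ (Sset c \subset [set i; ordS i]).
    apply/negP=> /subset_leq_card; rewrite S3.
    by move: (cards2 i (ordS i)); case: (i != ordS i) => ->.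
  case/subsetPn=> u uS uN.
  have iS : i != ordS i.
    apply/eqP=> /(congr1 val); rewrite /= => e.
    have hi := ltn_ord i.
    move: e; case: (ltngtP i.+1 m) => h.
    - by rewrite modn_small //; lia.
    - lia.
    - by rewrite h modnn; lia.
  have sub3 : Sset c = [set i; ordS i; u].
    apply/eqP; rewrite eq_sym eqEcard S3; apply/andP; split.
      apply/subsetP=> v; rewrite !inE => /orP [/orP [] | ] /eqP -> //; by move: uS; rewrite inE.
    rewrite setUC cardsU1 cards2 !inE.
    move: uN; rewrite !inE negb_or => /andP [u1 u2].
    by rewrite iS u1 u2.
  exfalso; apply: (H3 i u) => //.
    by move: uN; rewrite !inE.
  move=> v; rewrite !inE => hv; apply/eqP; apply/negPn/negP => cv.
  have : v \in Sset c by rewrite /Sset inE.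
  by rewrite sub3 !inE -orbA (negbTE hv).
- have [T0|[T1|T2]] : #|Tset c| = 0%N \/ #|Tset c| = 1%N \/ (2 <= #|Tset c|)%N by lia.
  + by move: (@full_case c i0 T0 ci0); lia.
  + have [t [sup ct]] := @win_case c T1.
    by rewrite S4 /= in sup; case: (H4 _ sup ct).
  + lia.
- have [T0|T1] : #|Tset c| = 0%N \/ (1 <= #|Tset c|)%N by lia.
  + by move: (@full_case c i0 T0 ci0); lia.
  + lia.
Qed.

End Comb.



Section Main.
Variable p : nat.
Hypothesis pP : prime p.
Hypothesis p_odd : odd p.
Variable w : 'F_p.
Hypothesis wP : 3.-primitive_root w.
Local Notation n := (3 * p)%N.
Local Notation F := ('F_p).

Lemma w3' : w ^+ 3 = 1. Proof. exact: prim_expr_order wP. Qed.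

Lemma wn1 : w != 1.
Proof.
apply/negP=> /eqP e.
have := eq_prim_root_expr wP 1 0; rewrite expr1 expr0 e eqxx.
by [].
Qed.

Lemma hw' : w ^+ 2 + w + 1 = 0.
Proof.
apply/eqP; have : (w - 1) * (w ^+ 2 + w + 1) = 0.
  transitivity (w ^+ 3 - 1); first by ring.
  by rewrite w3' subrr.
by move/eqP; rewrite mulf_eq0 subr_eq0 (negbTE wn1).
Qed.

Lemma h3' : 3%:R != 0 :> F.
Proof.
apply/negP=> /eqP h.
have : (w - 1) ^+ 2 = 0.
  transitivity ((w ^+ 2 + w + 1) - 3%:R * w); first by ring.
  by rewrite hw' h mul0r subrr.
by move/eqP; rewrite expf_eq0 /= subr_eq0 (negbTE wn1).
Qed.

Lemma p_gt2 : (2 < p)%N.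
Proof.
have := prime_gt1 pP; case: p p_odd => [|[|[|q]]] //.
Qed.

Lemma h2' : 2%:R != 0 :> F.
Proof.
rewrite -(dvdn_pcharf (pchar_Fp pP)); apply/negP=> /(dvdn_leq (isT : (0 < 2)%N)).
by have := p_gt2; lia.
Qed.

Lemma p_ne3 : p != 3%N.
Proof. by apply/eqP=> e; move: h3'; rewrite -(dvdn_pcharf (pchar_Fp pP)) e. Qed.

Lemma n_ge9 : (9 <= n)%N. Proof. by have := p_gt2; lia. Qed.


Definition cw (g : {poly F}) (c : word F n) :=
  exists f q, word_poly c = g * f - q * ('X^n - 1).

Lemma Ccode_cw r1 r2 r3 c : Ccode w r1 r2 r3 c -> cw (gen3 w r1 r2 r3) c.
Proof.
move=> [f hf]; exists f, ((gen3 w r1 r2 r3 * f) %/ ('X^n - 1)); rewrite hf.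
by rewrite {2}(divp_eq (gen3 w r1 r2 r3 * f) ('X^n - 1)) [_ * _ + _]addrC addrK.
Qed.

Definition dw (x y : word F n) : word F n := [ffun i => x i - y i].

Lemma cw_sub g x y : cw g x -> cw g y -> cw g (dw x y).
Proof.
move=> [f1 [q1 h1]] [f2 [q2 h2]]; exists (f1 - f2), (q1 - q2).
have -> : word_poly (dw x y) = word_poly x - word_poly y.
  rewrite /word_poly -sumrB; apply: eq_bigr => i _; by rewrite ffunE scalerBl.
rewrite h1 h2; ring.
Qed.

Lemma pd_pw x y : pair_dist x y = pw _ _ (dw x y).
Proof. by rewrite /pair_dist /pw; apply: eq_card => i; rewrite !inE !ffunE !subr_eq0. Qed.

Lemma dw_ne x y : x <> y -> exists i, dw x y i != 0.
Proof.
move=> xy; case: (pickP (fun i => dw x y i != 0)) => [i hi|h]; first by exists i.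
exfalso; apply: xy; apply/ffunP=> i; move/negbT: (h i).
by rewrite ffunE negbK subr_eq0 => /eqP.
Qed.

Lemma wn : w ^+ n = 1. Proof. by rewrite exprM w3' expr1n. Qed.
Lemma w2n : (w ^+ 2) ^+ n = 1. Proof. by rewrite exprAC wn expr1n. Qed.

Lemma cw_cond r1 r2 r3 c : cw (gen3 w r1 r2 r3) c ->
  [/\ forall j, (j < r1)%N -> Sj p c 1 j = 0, forall j, (j < r2)%N -> Sj p c w j = 0
    & forall j, (j < r3)%N -> Sj p c (w ^+ 2) j = 0].
Proof.
move=> [f [q h]]; split=> j hj.
- apply: (@cond p pP c 1 r1 (('X - w%:P) ^+ r2 * ('X - (w ^+ 2)%:P) ^+ r3 * f) q) => //.
    exact: expr1n.
  by rewrite h /gen3 polyC1 -!mulrA.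
- apply: (@cond p pP c w r2 (('X - 1) ^+ r1 * ('X - (w ^+ 2)%:P) ^+ r3 * f) q) => //.
    exact: wn.
  by rewrite h /gen3; congr (_ - _); ring.
- apply: (@cond p pP c (w ^+ 2) r3 (('X - 1) ^+ r1 * ('X - w%:P) ^+ r2 * f) q) => //.
    exact: w2n.
  by rewrite h /gen3; congr (_ - _); ring.
Qed.

Lemma SjL c a j L : supp _ _ c L -> uniq L ->
  Sj p c a j = \sum_(i <- L) c i * a ^+ i * (i ^_ j)%:R.
Proof.
move=> hs hU; rewrite /Sj (bigID (fun i => i \in L)) /=.
rewrite [X in _ + X]big1 ?addr0 => [|i iL]; last by rewrite (hs i iL) !mul0r.
by rewrite big_uniq.
Qed.

Lemma xS (i : 'I_n) : ((ordS i : nat)%:R : F) = (i : nat)%:R + 1.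
Proof. by rewrite /= natmodn // -[(nat_of_ord i).+1]addn1 natrD. Qed.

Lemma aS (a : F) (i : 'I_n) : a ^+ n = 1 -> a ^+ (ordS i) = a ^+ i * a.
Proof. by move=> an; rewrite /= (expr_mod _ an) exprSr. Qed.

Lemma ff0 k : ((k ^_ 0)%:R : F) = 1. Proof. by rewrite ffactn0. Qed.
Lemma ff1 k : ((k ^_ 1)%:R : F) = k%:R. Proof. by rewrite ffactn1. Qed.
Lemma ff2 k : ((k ^_ 2)%:R : F) = k%:R * (k%:R - 1).
Proof. case: k => [|k]; first by rewrite mul0r. by rewrite ffactnS ffactn1 natrM /= -[k.+1]addn1 natrD addrK. Qed.


Lemma via {E R : F} : R = 0 -> E = R -> E = 0.
Proof. by move=> -> . Qed.

Lemma uniq_iter (s : 'I_n) k : (k <= n)%N -> uniq [seq iter j (@ordS n) s | j <- iota 0 k].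
Proof.
move=> hk; rewrite map_inj_in_uniq ?iota_uniq // => a b; rewrite !mem_iota => ha hb.
by apply: iter_inj; lia.
Qed.

Lemma U2 (s : 'I_n) : uniq [:: s; ordS s].
Proof. have h : (2 <= n)%N by have := n_ge9; lia. by have /= := uniq_iter s 2 h. Qed.
Lemma U3 (s : 'I_n) : uniq [:: s; ordS s; ordS (ordS s)].
Proof. have h : (3 <= n)%N by have := n_ge9; lia. by have /= := uniq_iter s 3 h. Qed.
Lemma U4 (s : 'I_n) : uniq [:: s; ordS s; ordS (ordS s); ordS (ordS (ordS s))].
Proof. have h : (4 <= n)%N by have := n_ge9; lia. by have /= := uniq_iter s 4 h. Qed.

Lemma wsn0 (k : nat) : w ^+ k != 0.
Proof. by rewrite expf_neq0 // (@w_neq0 _ _ hw'). Qed.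

Lemma H_single c a : a != 0 -> Sj p c a 0 = 0 ->
  forall s, supp _ _ c [:: s] -> c s != 0 -> False.
Proof.
move=> a0 e s hs cs; move: e; rewrite (SjL _ _ _ _ hs) // big_cons !big_nil addr0 ff0 mulr1.
by move/prod0L => /(_ (expf_neq0 _ a0)) /eqP; rewrite (negbTE cs).
Qed.

Lemma H_pairadj c : Sj p c w 0 = 0 -> Sj p c w 1 = 0 ->
  forall s, supp _ _ c [:: s; ordS s] -> c s != 0 -> False.
Proof.
move=> e0 e1 s hs cs.
move: e0 e1; rewrite !(SjL _ _ _ _ hs) ?U2 // !big_cons !big_nil !addr0 !ff0 !ff1 xS (aS _ _ wn).
move=> e0 e1.
have B0 : c (ordS s) = 0.
  apply: (@pairAdj _ w hw' (c s) (c (ordS s)) (w ^+ s) (s : nat)%:R (wsn0 _)).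
  - by apply: (via e0); ring.
  - by apply: (via e1); ring.
move: e0; rewrite B0 !mul0r addr0 mulr1 => /prod0L /(_ (wsn0 _)) /eqP.
by rewrite (negbTE cs).
Qed.


Ltac expand hs U := rewrite !(SjL _ _ _ _ hs) ?U // !big_cons !big_nil !addr0
  ?ff0 ?ff1 ?ff2 ?xS ?expr1n ?(aS _ _ wn) ?(aS _ _ w2n).

Lemma coprime3p : coprime 3 p.
Proof. by rewrite prime_coprime // dvdn_prime2 // eq_sym p_ne3. Qed.

Lemma H_pairany c : Sj p c 1 0 = 0 -> Sj p c 1 1 = 0 -> Sj p c w 0 = 0 ->
  forall s u, s != u -> supp _ _ c [:: s; u] -> c s != 0 -> False.
Proof.
move=> e0 e1 e2 s u su hs cs.
have U : uniq [:: s; u] by rewrite /= inE su.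
move: e0 e1 e2; expand hs U => e0 e1 e2.
have [hx ha] : (s : nat)%:R = (u : nat)%:R :> F /\ w ^+ s = w ^+ u.
  apply: (@pairAny _ (c s) (c u) (s : nat)%:R (u : nat)%:R (w ^+ s) (w ^+ u) cs).
  - by apply: (via e0); ring.
  - by apply: (via e1); ring.
  - by apply: (via e2); ring.
have mp : (s == u %[mod p])%N.
  have h1 := val_Fp_nat pP s; have h2 := val_Fp_nat pP u.
  by rewrite -h1 -h2 hx.
have m3 : (s == u %[mod 3])%N by rewrite -(eq_prim_root_expr wP) ha.
have : (s == u %[mod n])%N by rewrite chinese_remainder ?coprime3p // m3 mp.
rewrite !modn_small // => /eqP /val_inj e.
by move: su; rewrite e eqxx.
Qed.

Lemma H_tripcons c : Sj p c 1 0 = 0 -> Sj p c 1 1 = 0 -> Sj p c w 0 = 0 ->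
  forall s, supp _ _ c [:: s; ordS s; ordS (ordS s)] -> c s != 0 -> False.
Proof.
move=> e0 e1 e2 s hs cs.
move: e0 e1 e2; expand hs U3 => e0 e1 e2.
apply: (@tripleCons _ w hw' h3' (c s) (c (ordS s)) (c (ordS (ordS s))) (s : nat)%:R (w ^+ s) cs (wsn0 _)).
- by apply: (via e0); ring.
- by apply: (via e1); ring.
- by apply: (via e2); ring.
Qed.

Lemma U3' (s u : 'I_n) : u \notin [:: s; ordS s] -> uniq [:: s; ordS s; u].
Proof.
move=> hu; have := U2 s; rewrite /= !inE in hu *; rewrite !negb_or in hu *.
move/andP: hu => [h1 h2] /andP [h3 _].
by rewrite h3 eq_sym h1 eq_sym h2.
Qed.

Lemma H_tripadjA c : Sj p c 1 0 = 0 -> Sj p c 1 1 = 0 -> Sj p c 1 2 = 0 ->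
  forall s u, u \notin [:: s; ordS s] -> supp _ _ c [:: s; ordS s; u] -> c s != 0 ->
     c (ordS s) != 0 -> False.
Proof.
move=> e0 e1 e2 s u hu hs cs cS.
have U := U3' _ _ hu.
move: e0 e1 e2; expand hs U => e0 e1 e2.
apply: (@tripleAdjA _ (c s) (c (ordS s)) (c u) (s : nat)%:R (u : nat)%:R cs cS).
- by apply: (via e0); ring.
- by apply: (via e1); ring.
- by apply: (via e2); ring.
Qed.

Lemma H_tripadjB c : Sj p c 1 0 = 0 -> Sj p c 1 1 = 0 -> Sj p c w 0 = 0 -> Sj p c w 1 = 0 ->
  forall s u, u \notin [:: s; ordS s] -> supp _ _ c [:: s; ordS s; u] -> c s != 0 ->
     c (ordS s) != 0 -> False.
Proof.
move=> e0 e1 e2 e3 s u hu hs cs cS.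
have U := U3' _ _ hu.
move: e0 e1 e2 e3; expand hs U => e0 e1 e2 e3.
apply: (@tripleAdjB _ w hw' h3' (c s) (c (ordS s)) (c u) (s : nat)%:R (u : nat)%:R
   (w ^+ s) (w ^+ u) cs cS (wsn0 _)).
- by apply: (via e0); ring.
- by apply: (via e1); ring.
- by apply: (via e2); ring.
- by apply: (via e3); ring.
Qed.

Lemma wk3 (k : nat) : (w ^+ k) ^+ 3 = 1.
Proof. by rewrite exprAC w3' expr1n. Qed.

Lemma H_tripadjC c : Sj p c 1 0 = 0 -> Sj p c w 0 = 0 -> Sj p c (w ^+ 2) 0 = 0 ->
  forall s u, u \notin [:: s; ordS s] -> supp _ _ c [:: s; ordS s; u] -> c s != 0 ->
     c (ordS s) != 0 -> False.
Proof.
move=> e0 e2 e4 s u hu hs cs cS.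
have U := U3' _ _ hu.
move: e0 e2 e4; expand hs U => e0 e2 e4.
rewrite [(w ^+ 2) ^+ s]exprAC [(w ^+ 2) ^+ u]exprAC in e4.
apply: (@tripleAdjC _ w hw' h3' (c s) (c (ordS s)) (c u)
   (w ^+ s) (w ^+ u) cs cS (wsn0 _) (wk3 _) (wk3 _)).
- by apply: (via e0); ring.
- by apply: (via e2); ring.
- by apply: (via e4); ring.
Qed.

Lemma H_quadA c : Sj p c 1 0 = 0 -> Sj p c 1 1 = 0 -> Sj p c 1 2 = 0 -> Sj p c w 0 = 0 ->
  forall s, supp _ _ c [:: s; ordS s; ordS (ordS s); ordS (ordS (ordS s))] -> c s != 0 -> False.
Proof.
move=> e0 e1 e2 e3 s hs cs.
move: e0 e1 e2 e3; expand hs U4 => e0 e1 e2 e3.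
apply: (@quadA _ w hw' h3' h2' (c s) (c (ordS s)) (c (ordS (ordS s))) (c (ordS (ordS (ordS s))))
   (s : nat)%:R (w ^+ s) cs (wsn0 _)).
- by apply: (via e0); ring.
- by apply: (via e1); ring.
- by apply: (via e2); ring.
- by apply: (via e3); ring.
Qed.

Lemma H_quadB c : Sj p c 1 0 = 0 -> Sj p c 1 1 = 0 -> Sj p c w 0 = 0 -> Sj p c w 1 = 0 ->
  forall s, supp _ _ c [:: s; ordS s; ordS (ordS s); ordS (ordS (ordS s))] -> c s != 0 -> False.
Proof.
move=> e0 e1 e2 e3 s hs cs.
move: e0 e1 e2 e3; expand hs U4 => e0 e1 e2 e3.
apply: (@quadB _ w hw' h3' (c s) (c (ordS s)) (c (ordS (ordS s))) (c (ordS (ordS (ordS s))))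
   (s : nat)%:R (w ^+ s) cs (wsn0 _)).
- by apply: (via e0); ring.
- by apply: (via e1); ring.
- by apply: (via e2); ring.
- by apply: (via e3); ring.
Qed.

Lemma H_quadC c : Sj p c 1 0 = 0 -> Sj p c 1 1 = 0 -> Sj p c w 0 = 0 -> Sj p c (w ^+ 2) 0 = 0 ->
  forall s, supp _ _ c [:: s; ordS s; ordS (ordS s); ordS (ordS (ordS s))] -> c s != 0 -> False.
Proof.
move=> e0 e1 e2 e3 s hs cs.
move: e0 e1 e2 e3; expand hs U4 => e0 e1 e2 e3.
apply: (@quadC _ w hw' h3' (c s) (c (ordS s)) (c (ordS (ordS s))) (c (ordS (ordS (ordS s))))
   (s : nat)%:R (w ^+ s) ((w ^+ 2) ^+ s) cs (wsn0 _) (expf_neq0 _ (wsn0 2))).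
- by apply: (via e0); ring.
- by apply: (via e1); ring.
- by apply: (via e2); ring.
- by apply: (via e3); ring.
Qed.


Definition wordOf (q : {poly F}) : word F n := [ffun i : 'I_n => q`_i].

Lemma wp_wordOf (q : {poly F}) : (size q <= n)%N -> word_poly (wordOf q) = q.
Proof.
move=> hq; rewrite /word_poly (eq_bigr (fun i : 'I_n => q`_(nat_of_ord i) *: 'X^(nat_of_ord i))) => [|i _]; last by rewrite ffunE.
rewrite -poly_def; apply/polyP => k; rewrite coef_poly; case: ifP => // /negbT.
by rewrite -leqNgt => hk; rewrite nth_default //; exact: leq_trans hq hk.
Qed.

Lemma Ccode_of r1 r2 r3 (f q : {poly F}) : gen3 w r1 r2 r3 * f = q -> (size q <= n)%N ->
  Ccode w r1 r2 r3 (wordOf q).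
Proof.
move=> E hq; exists f; rewrite wp_wordOf // E modp_small // size_Xn_sub_1 //.
by have := n_ge9; lia.
Qed.

Definition zw : word F n := [ffun => 0].

Lemma Ccode_zw r1 r2 r3 : Ccode w r1 r2 r3 zw.
Proof.
exists 0; rewrite mulr0 mod0p /word_poly big1 // => i _; by rewrite ffunE scale0r.
Qed.

Lemma size_of (q : {poly F}) (L : seq nat) : (forall k, (q`_k != 0) = (k \in L)) ->
  all (fun k => k < n)%N L -> (size q <= n)%N.
Proof.
move=> hq hL; apply/leq_sizeP => j hj; apply/eqP; apply/negPn/negP.
rewrite hq => jL; move/allP: hL => /(_ j jL); lia.
Qed.

Lemma card_L (P : pred 'I_n) (L : seq nat) : uniq L -> all (fun k => k < n)%N L ->
  (forall i : 'I_n, P i = ((i : nat) \in L)) -> #|P| = size L.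
Proof.
move=> hU hA hP.
have -> : #|P| = #|(pmap insub L : seq 'I_n)|.
  by apply: eq_card => i; rewrite [in RHS]mem_pmap_sub -hP.
move/card_uniqP: (pmap_sub_uniq ('I_n) hU) => ->.
by rewrite size_pmap_sub; apply/eqP; rewrite -all_count.
Qed.

Lemma modS (i : 'I_n) : (i.+1 %% n = if i.+1 == n then 0 else i.+1)%N.
Proof.
have hi := ltn_ord i.
case: eqP => h; first by rewrite h modnn.
by rewrite modn_small //; lia.
Qed.

Lemma pd_word (q : {poly F}) (L L' : seq nat) : (forall k, (q`_k != 0) = (k \in L)) ->
  uniq L' -> all (fun k => k < n)%N L' ->
  (forall i : nat, (i < n)%N -> ((i \in L) || ((if i.+1 == n then 0 else i.+1)%N \in L)) = (i \in L')) ->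
  pair_dist (wordOf q) zw = size L'.
Proof.
move=> hq hU hA hL; rewrite /pair_dist.
apply: card_L => // i; rewrite /= !ffunE /=.
by rewrite !hq modS (hL _ (ltn_ord i)).
Qed.

Lemma frob (a : F) : ('X - a%:P) ^+ p = 'X^p - a%:P.
Proof.
have chP : p \in [char {poly F}] by rewrite pchar_poly pchar_Fp.
rewrite -(pFrobenius_autE chP) (pFrobenius_autB_comm chP (mulrC _ _)) !pFrobenius_autE.
by rewrite -rmorphXn /= -{2}(expf_card a) card_Fp.
Qed.


Lemma n_gt1 : (1 < n)%N. Proof. by have := n_ge9; lia. Qed.

Lemma lower_gen r1 r2 r3 d :
  (forall c i0, cw (gen3 w r1 r2 r3) c -> c i0 != 0 -> (d <= pw _ _ c)%N) ->
  forall x y, Ccode w r1 r2 r3 x -> Ccode w r1 r2 r3 y -> x <> y -> (d <= pair_dist x y)%N.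
Proof.
move=> H x y cx cy xy; rewrite pd_pw; have [i0 hi0] := dw_ne _ _ xy.
by apply: (H _ i0 _ hi0); apply: cw_sub; apply: Ccode_cw.
Qed.

Lemma wordOf_nz (q : {poly F}) k (hk : (k < n)%N) : q`_k != 0 -> wordOf q <> zw.
Proof.
move=> h e; move: (congr1 (fun f : word F n => f (Ordinal hk)) e); rewrite !ffunE /=.
by move/eqP; rewrite (negbTE h).
Qed.

Lemma w0 : w != 0. Proof. exact: (@w_neq0 _ _ hw'). Qed.

Lemma part1 r2 : (2 <= r2 <= p.-1)%N -> min_pair_dist (Ccode w 0 r2 0) 4.
Proof.
move=> /andP [r2a r2b].
have hp := p_gt2.
have hq : forall k, (('X^p - w%:P : {poly F})`_k != 0) = (k \in [:: 0; p]%N).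
  move=> k; rewrite coefB coefXn coefC !inE.
  have [->|hk] := eqVneq k p.
    rewrite orbT (_ : (p == 0)%N = false); last lia.
    by rewrite /= subr0 oner_neq0.
  rewrite orbF; case: k hk => [|k] hk /=.
    by rewrite mulr0n sub0r oppr_eq0 w0.
  by rewrite mulr0n subrr eqxx.
split.
  exists (wordOf ('X^p - w%:P)), zw; split.
  - apply: (@Ccode_of _ _ _ (('X - w%:P) ^+ (p - r2))).
      by rewrite /gen3 !expr0 mul1r mulr1 -exprD subnKC ?frob //; lia.
    by apply: (size_of _ _ hq) => /=; lia.
  - exact: Ccode_zw.
  - by apply: (@wordOf_nz _ 0); [lia | rewrite hq inE eqxx].
  - rewrite (@pd_word _ _ [:: 0; p; n.-1; p.-1]%N hq) //.
    + rewrite /= !inE; lia.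
    + rewrite /=; lia.
    + move=> i hi; rewrite !inE; case: (i.+1 =P n) => h; lia.
apply: lower_gen => c i0 hc hi0.
have [_ C2 _] := cw_cond _ _ _ _ hc.
have e0 := C2 0%N (leq_trans (isT : (0 < 2)%N) r2a).
have e1 := C2 1%N (leq_trans (isT : (1 < 2)%N) r2a).
apply: (@lb4 _ n n_gt1 c i0 _ hi0); first by have := n_ge9; lia.
  exact: (@H_single c w w0 e0).
exact: (@H_pairadj c e0 e1).
Qed.


Definition spoly (l : seq (F * nat)) : {poly F} := \sum_(e <- l) e.1 *: 'X^(e.2).

Lemma spoly_coef l t : uniq (map snd l) -> all (fun e => e.1 != 0) l ->
  ((spoly l)`_t != 0) = (t \in map snd l).
Proof.
elim: l => [|e l IH] /=; first by rewrite /spoly big_nil coef0 eqxx.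
move=> /andP [he hu] /andP [h1 ha]; rewrite /spoly big_cons coefD coefZ coefXn inE -/(spoly l).
have [et|hne] := eqVneq t e.2.
  have : (spoly l)`_t = 0 by apply/eqP; rewrite -[_ == 0]negbK IH // et (negbTE he).
  by move=> ->; rewrite /= addr0 mulr1 h1.
by rewrite /= mulr0n mulr0 add0r IH.
Qed.

Lemma neq_c1 : 1 + 2%:R * w != 0.
Proof.
apply/negP=> /eqP h; move: h3'.
have -> : 3%:R = 4%:R * (w ^+ 2 + w + 1) - (1 + 2%:R * w) ^+ 2 :> F by ring.
by rewrite hw' h; apply/negP; rewrite expr0n /= mulr0 subrr.
Qed.

Lemma neq_c2 : 2%:R + w != 0.
Proof.
apply/negP=> /eqP h; move: h3'.
have -> : 3%:R = (w ^+ 2 + w + 1) - (2%:R + w) * (w - 1) :> F by ring.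
by rewrite hw' h mul0r subrr eqxx.
Qed.

Lemma neq_c3 : 1 + w != 0.
Proof.
apply/negP=> /eqP h; move: (w0); apply/negP; rewrite negbK.
have : w ^+ 2 = 0.
  transitivity ((w ^+ 2 + w + 1) - (1 + w)); first by ring.
  by rewrite hw' h subrr.
by move/eqP; rewrite expf_eq0.
Qed.

Lemma part2 : (2 <= p.-1)%N -> min_pair_dist (Ccode w 2 1 0) 5.
Proof.
move=> _; have hp := p_gt2; have hn := n_ge9.
pose q := spoly [:: (- w, 0%N); (1 + 2%:R * w, 1%N); (- (2%:R + w), 2%N); (1, 3%N)].
have hq : forall k, (q`_k != 0) = (k \in [:: 0; 1; 2; 3]%N).
  move=> k; rewrite spoly_coef //= ?oppr_eq0 ?w0 ?neq_c1 ?neq_c2 ?oner_neq0 //.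
split.
  exists (wordOf q), zw; split.
  - apply: (@Ccode_of _ _ _ 1).
      by rewrite /q /spoly !big_cons big_nil /= -!mul_polyC /gen3; ring.
    by apply: (size_of _ _ hq) => /=; lia.
  - exact: Ccode_zw.
  - by apply: (@wordOf_nz _ 0); [lia | rewrite hq inE eqxx].
  - rewrite (@pd_word _ _ [:: 0; 1; 2; 3; n.-1]%N hq) //.
    + rewrite /= !inE; lia.
    + rewrite /=; lia.
    + move=> i hi; rewrite !inE; case: (i.+1 =P n) => h; lia.
apply: lower_gen => c i0 hc hi0.
have [C1 C2 _] := cw_cond _ _ _ _ hc.
have e0 := C1 0%N isT; have e1 := C1 1%N isT; have e2 := C2 0%N isT.
apply: (@lb5 _ n n_gt1 c i0 _ hi0); first by lia.
- exact: (@H_single c w w0 e2).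
- exact: (@H_pairany c e0 e1 e2).
- exact: (@H_tripcons c e0 e1 e2).
Qed.


Lemma X1 : ('X - 1 : {poly F}) = 'X - 1%:P. Proof. by rewrite polyC1. Qed.

Lemma part3 r1 r2 : (r1 <= p.-1)%N -> (r2 <= r1)%N -> (1 <= r2)%N ->
  (4 <= r1 + r2)%N -> min_pair_dist (Ccode w r1 r2 0) 6.
Proof.
move=> hr1 hr21 hr2 hs; have hp := p_gt2; have hn := n_ge9.
pose q := spoly [:: (w, 0%N); (- (1 + w), p); (1, (p + p)%N)].
have hq : forall k, (q`_k != 0) = (k \in [:: 0; p; p + p]%N).
  move=> k; rewrite spoly_coef //= ?oppr_eq0 ?w0 ?neq_c3 ?oner_neq0 //.
  rewrite !inE; lia.
split.
  exists (wordOf q), zw; split.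
  - apply: (@Ccode_of _ _ _ (('X - 1) ^+ (p - r1) * ('X - w%:P) ^+ (p - r2))).
      transitivity (('X - 1) ^+ r1 * ('X - 1) ^+ (p - r1) * (('X - w%:P) ^+ r2 * ('X - w%:P) ^+ (p - r2))).
        by rewrite /gen3 expr0 mulr1; ring.
      rewrite -!exprD !subnKC; try lia.
      rewrite X1 !frob /q /spoly !big_cons big_nil /= -!mul_polyC exprD; ring.
    by apply: (size_of _ _ hq) => /=; lia.
  - exact: Ccode_zw.
  - by apply: (@wordOf_nz _ 0); [lia | rewrite hq inE eqxx].
  - rewrite (@pd_word _ _ [:: 0; p; p + p; n.-1; p.-1; (p + p).-1]%N hq) //.
    + rewrite /= !inE; lia.
    + rewrite /=; lia.
    + move=> i hi; rewrite !inE; case: (i.+1 =P n) => h; lia.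
apply: lower_gen => c i0 hc hi0.
have [C1 C2 _] := cw_cond _ _ _ _ hc.
have e0 := C1 0%N (ltac:(lia)); have e1 := C1 1%N (ltac:(lia)); have e2 := C2 0%N (ltac:(lia)).
have n6 : (6 <= n)%N by lia.
case: (leqP 3 r1) => h3r.
  have e3 := C1 2%N (ltac:(lia)).
  apply: (@lb6 _ n n_gt1 c i0 n6 hi0).
  - exact: (@H_single c w w0 e2).
  - exact: (@H_pairany c e0 e1 e2).
  - exact: (@H_tripadjA c e0 e1 e3).
  - exact: (@H_quadA c e0 e1 e3 e2).
have e3 := C2 1%N (ltac:(lia)).
apply: (@lb6 _ n n_gt1 c i0 n6 hi0).
- exact: (@H_single c w w0 e2).
- exact: (@H_pairany c e0 e1 e2).
- exact: (@H_tripadjB c e0 e1 e2 e3).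
- exact: (@H_quadB c e0 e1 e2 e3).
Qed.

Lemma cub : ('X - 1) * ('X - w%:P) * ('X - (w ^+ 2)%:P) = 'X^3 - 1 :> {poly F}.
Proof.
transitivity ('X^3 - 1 - (w ^+ 2 + w + 1)%:P * ('X^2 - w%:P * 'X) - (w ^+ 3 - 1)%:P).
  by ring.
by rewrite hw' w3' subrr !polyC0 mul0r !subr0.
Qed.

Lemma part4 r2 r3 : (2 <= p.-1)%N -> (r3 <= r2 <= 2)%N ->
  (2 <= r2 + r3 <= 4)%N -> min_pair_dist (Ccode w 2 r2 r3) 6.
Proof.
move=> _ /andP [h32 h2] /andP [hs _]; have hp := p_gt2; have hn := n_ge9.
pose q := spoly [:: (1, 0%N); (- 2%:R, 3%N); (1, 6%N)].
have hq : forall k, (q`_k != 0) = (k \in [:: 0; 3; 6]%N).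
  by move=> k; rewrite spoly_coef //= ?oppr_eq0 ?h2' ?oner_neq0.
split.
  exists (wordOf q), zw; split.
  - apply: (@Ccode_of _ _ _ (('X - w%:P) ^+ (2 - r2) * ('X - (w ^+ 2)%:P) ^+ (2 - r3))).
      transitivity (('X - 1) ^+ 2 * (('X - w%:P) ^+ r2 * ('X - w%:P) ^+ (2 - r2))
          * (('X - (w ^+ 2)%:P) ^+ r3 * ('X - (w ^+ 2)%:P) ^+ (2 - r3))).
        by rewrite /gen3; ring.
      rewrite -!exprD !subnKC; try lia.
      transitivity ((('X - 1) * ('X - w%:P) * ('X - (w ^+ 2)%:P)) ^+ 2); first by ring.
      rewrite cub /q /spoly !big_cons big_nil /= -!mul_polyC; ring.
    by apply: (size_of _ _ hq) => /=; lia.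
  - exact: Ccode_zw.
  - by apply: (@wordOf_nz _ 0); [lia | rewrite hq inE eqxx].
  - rewrite (@pd_word _ _ [:: 0; 3; 6; n.-1; 2; 5]%N hq) //.
    + rewrite /= !inE; lia.
    + rewrite /=; lia.
    + move=> i hi; rewrite !inE; case: (i.+1 =P n) => h; lia.
apply: lower_gen => c i0 hc hi0.
have [C1 C2 C3] := cw_cond _ _ _ _ hc.
have e0 := C1 0%N isT; have e1 := C1 1%N isT; have e2 := C2 0%N (ltac:(lia)).
have n6 : (6 <= n)%N by lia.
case: (r2 =P 2%N) => hr2.
  have e3 := C2 1%N (ltac:(lia)).
  apply: (@lb6 _ n n_gt1 c i0 n6 hi0).
  - exact: (@H_single c w w0 e2).
  - exact: (@H_pairany c e0 e1 e2).
  - exact: (@H_tripadjB c e0 e1 e2 e3).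
  - exact: (@H_quadB c e0 e1 e2 e3).
have e4 := C3 0%N (ltac:(lia)).
apply: (@lb6 _ n n_gt1 c i0 n6 hi0).
- exact: (@H_single c w w0 e2).
- exact: (@H_pairany c e0 e1 e2).
- exact: (@H_tripadjC c e0 e2 e4).
- exact: (@H_quadC c e0 e1 e2 e4).
Qed.

End Main.

Theorem proposition3p15 (p : nat) (w : 'F_p) :
  prime p -> odd p -> 3.-primitive_root w ->
  (forall r2 : nat, (2 <= r2 <= p.-1)%N -> min_pair_dist (Ccode w 0 r2 0) 4) /\
  ((2 <= p.-1)%N -> min_pair_dist (Ccode w 2 1 0) 5) /\
  (forall r1 r2 : nat, (r1 <= p.-1)%N -> (r2 <= r1)%N -> (1 <= r2)%N ->
     (4 <= r1 + r2)%N -> min_pair_dist (Ccode w r1 r2 0) 6) /\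
  (forall r2 r3 : nat, (2 <= p.-1)%N -> (r3 <= r2 <= 2)%N ->
     (2 <= r2 + r3 <= 4)%N -> min_pair_dist (Ccode w 2 r2 r3) 6).
Proof.
move=> pP po wP; split; [|split; [|split]].
- exact: part1.
- exact: part2.
- exact: part3.
- exact: part4.
Qed.
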